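(* Let $Z$ be a compact metrisable space and $\mathfrak{X}$ a $Z$-valued switched Bebutov shift. Let $(\psi_n)_{n=1}^\infty$ be a sequence in $\mathfrak{X}$, and suppose there is a strictly increasing unbounded real sequence $(\tau_n)_{n=0}^\infty$ with $\tau_0=0$ such that $\psi_n(\tau_n)=\psi_{n+1}(\tau_n)$ for each $n\ge1$. Let $\xi\colon[0,\infty)\to Z$ be the function which coincides with $\psi_n$ on $[\tau_{n-1},\tau_n]$ for each $n\ge1$. Then $\xi\in\mathfrak{X}$.
   Context: $C([0,\infty),Z)$ carries the compact-open topology (uniform convergence on compact sets). $(\sigma^\tau\phi)(t)\coloneq\phi(\tau+t)$. A $Z$-valued Bebutov shift is a set $\mathfrak{X}\subseteq C([0,\infty),Z)$, compact in the compact-open topology, with $\sigma^\tau\phi\in\mathfrak{X}$ for all $\phi\in\mathfrak{X}$, $\tau\ge0$. It is switched if moreover: whenever $\phi_1,\phi_2\in\mathfrak{X}$ satisfy $\phi_1(\tau)=\phi_2(\tau)$ for some $\tau>0$, the function $\psi$ equal to $\phi_1$ on $[0,\tau]$ and to $\phi_2$ on $[\tau,\infty)$ belongs to $\mathfrak{X}$. *)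

(* Defs.v *)
From HB Require Import structures.
From mathcomp Require Import all_boot all_order all_algebra.
From mathcomp Require Import all_classical all_reals all_analysis.
From mathcomp Require Import subtype_topology.
Import numFieldNormedType.Exports.
Set Implicit Arguments. Unset Strict Implicit. Unset Printing Implicit Defensive.
Import Order.TTheory GRing.Theory Num.Theory.
Local Open Scope classical_set_scope.
Local Open Scope ring_scope.

(* The half-line [0, +oo) as a topological space (subspace topology on the
   sigma type, via the library's set_type instance). *)
Notation halfline R := (set_type (`[0, +oo[%classic : set R)).

(* Coercion of a real into [0,+oo): x |-> max x 0 (only used with x >= 0). *)
Lemma halfline_mem (R : realType) (x : R) :
  (`[0, +oo[%classic : set R) (Num.max x 0).
Proof.
rewrite /= in_itv /= andbT le_max lexx orbT //.
Qed.

Definition toH (R : realType) (x : R) : halfline R :=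
  exist _ (Num.max x 0) (mem_set (halfline_mem x)).

Definition hval (R : realType) (t : halfline R) : R := set_val t.

Definition bshift (R : realType) (Z : Type) (tau : R) (phi : halfline R -> Z)
  : halfline R -> Z := fun t => phi (toH (tau + hval t)).

Definition bebutov_shift (R : realType) (Z : topologicalType)
    (X : set {compact-open, halfline R -> Z}) : Prop :=
  [/\ (forall phi, X phi -> continuous (phi : halfline R -> Z)),
      compact X &
      (forall phi tau, X phi -> 0 <= tau -> X (bshift tau phi))].

Definition switch (R : realType) (Z : Type) (tau : R)
    (phi1 phi2 : halfline R -> Z) : halfline R -> Z :=
  fun t => if hval t <= tau then phi1 t else phi2 t.

Definition switched_bebutov_shift (R : realType) (Z : topologicalType)
    (X : set {compact-open, halfline R -> Z}) : Prop :=
  bebutov_shift X /\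
  (forall (phi1 phi2 : {compact-open, halfline R -> Z}) (tau : R),
      X phi1 -> X phi2 -> 0 < tau -> phi1 (toH tau) = phi2 (toH tau) ->
      X (switch tau phi1 phi2 : {compact-open, halfline R -> Z})).

(* Main.v *)
Require Import Defs.
From HB Require Import structures.
From mathcomp Require Import all_boot all_order all_algebra.
From mathcomp Require Import all_classical all_reals all_analysis.
From mathcomp Require Import subtype_topology.
Import numFieldNormedType.Exports.
Import Order.TTheory GRing.Theory Num.Theory.
Local Open Scope classical_set_scope.
Local Open Scope ring_scope.

Theorem lemma2p19 (R : realType) (Z : pseudoMetricType R)
  (Zhaus : hausdorff_space Z) (Zcpt : compact [set: Z])
  (X : set {compact-open, halfline R -> Z})
  (HX : switched_bebutov_shift X)
  (psi : nat -> {compact-open, halfline R -> Z})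
  (Hpsi : forall n : nat, (1 <= n)%N -> X (psi n))
  (tau : nat -> R)
  (Htau0 : tau 0%N = 0)
  (Htau_incr : forall n : nat, tau n < tau n.+1)
  (Htau_unb : forall M : R, exists n : nat, M < tau n)
  (Hmatch : forall n : nat, (1 <= n)%N -> psi n (toH (tau n)) = psi n.+1 (toH (tau n)))
  (xi : {compact-open, halfline R -> Z})
  (Hxi : forall (n : nat) (t : halfline R), (1 <= n)%N ->
           tau n.-1 <= hval t <= tau n -> xi t = psi n t) :
  X xi.
Proof.
have hv0 : forall t : halfline R, 0 <= hval t.
  by move=> t; have := set_valP t; rewrite /= in_itv /= andbT /hval; exact.
have tau_ge0 : forall n, 0 <= tau n.
  elim=> [|n IH]; first by rewrite Htau0.
  exact: (le_trans IH (ltW (Htau_incr n))).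
have tau_pos : forall n, 0 < tau n.+1.
  by move=> n; exact: (le_lt_trans (tau_ge0 n) (Htau_incr n)).
have hvtoH : forall x : R, 0 <= x -> hval (toH x) = x.
  by move=> x hx; exact: max_l.
have toHE : forall (t : halfline R), toH (hval t) = t.
  move=> t; apply: val_inj => /=; rewrite max_l //; exact: hv0.
pose g := fix g (n : nat) : {compact-open, halfline R -> Z} :=
  match n with
  | 0 => psi 1%N
  | m.+1 => (switch (tau m.+1) (g m) (psi m.+2) : {compact-open, halfline R -> Z})
  end.
have gA : forall n t, hval t <= tau n.+1 -> g n t = xi t.
  elim=> [|n IH] t ht /=.
    by rewrite (Hxi 1%N) // Htau0 hv0 ht.
  rewrite /switch; case: ifP => h; first exact: IH.
  rewrite (Hxi n.+2) //= ht andbT; apply: ltW; rewrite ltNge h //.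
have gB : forall n t, tau n <= hval t -> g n t = psi n.+1 t.
  elim=> [|n IH] t ht //=.
  rewrite /switch; case: ifP => h //.
  have e : hval t = tau n.+1 by apply/eqP; rewrite eq_le h ht.
  rewrite IH; last by rewrite e ltW.
  by rewrite -(toHE t) e Hmatch.
have gX : forall n, X (g n).
  elim=> [|n IH] /=; first exact: Hpsi.
  apply: (proj2 HX) => //; first exact: Hpsi.
  rewrite gB; last by rewrite hvtoH ?ltW.
  by rewrite Hmatch.
have [_ cX _] := proj1 HX.
have [y [Xy cly]] : X `&` cluster (g @ \oo) !=set0.
  apply: cX.
  by exists 0%N => // n _; exact: gX.
suff -> : xi = y by [].
apply/funext => t; apply: Zhaus => A B nA nB.
have [N hN] := Htau_unb (hval t).
have [h [/= ht hB]] : [set h : {compact-open, halfline R -> Z} | h t = xi t]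
   `&` [set h | h @` [set t] `<=` interior B] !=set0.
  apply: cly.
  - exists N => // n /= hn; apply: gA.
    apply: (le_trans (ltW hN)).
    have tmono : forall k m, tau m <= tau (m + k)%N.
      elim=> [|k IHk] m; first by rewrite addn0.
      by rewrite addnS; exact: (le_trans (IHk m) (ltW (Htau_incr _))).
    have := tmono (n.+1 - N)%N N; rewrite subnKC //; exact: leqW.
  - apply: open_nbhs_nbhs; split.
      apply: compact_open_open; [exact: compact_set1 | exact: open_interior].
    by move=> _ [s -> <-].
exists (xi t); split; first exact: nbhs_singleton.
by rewrite -ht; apply: interior_subset; apply: hB; exists t.
Qed.
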